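(* Every absorbing hierarchical generator $\mathcal{H}$ is linearly independent (as a set of functions on $\mathbb{R}^d$).
   Context: Fix integers $d\ge1$, $n\ge2$, $m\ge2$; $s=n-1$, $p=m-1$. B-splines $\varphi^\ell_{\vec i}(\vec x)=\prod_kQ(n^\ell x_k-i_k)$ on $\mathbb{R}^d$ for $\ell\ge0$, $\vec i\in\mathbb{Z}^d$, $Q$ the uniform B-spline of order $m$ with knots $0,\dots,m$; $\mathfrak{B}$ the set of all of them; $\mathcal{B}^0=\{\varphi^0_{\vec i}:\vec i\in[-p:0]^d\}$. Children $\mathrm{ch}(\varphi^\ell_{\vec i})=\{\varphi^{\ell+1}_{\vec k}:n\vec i\le\vec k\le n\vec i+sm\}$, extended to sets by union. Cells $I^\ell_{\vec i}=\prod_k[i_kn^{-\ell},(i_k+1)n^{-\ell})$; cell support $\mathbb{I}(\varphi^\ell_{\vec i})=\{I^\ell_{\vec k}:\vec i\le\vec k\le\vec i+p\}$ (componentwise), extended to sets by union. A lineage is a finite $\mathcal{L}\subset\mathfrak{B}$ with $\mathcal{L}\subset\mathcal{B}^0\cup\mathrm{ch}(\mathcal{L})$; its hierarchical generator is $\mathcal{H}=(\mathcal{B}^0\cup\mathrm{ch}(\mathcal{L}))\setminus\mathcal{L}$. $\mathcal{H}$ is absorbing if there is no $\varphi\in\mathcal{H}$ with $\mathbb{I}(\varphi)\subset\mathbb{I}(\mathcal{L})$. *)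

(* Defs.v *)
From Stdlib Require Import Reals ZArith List Lia Lra.
Import ListNotations.
Open Scope R_scope.

(* Uniform (cardinal) B-spline of order k with knots 0,1,...,k:
   order 1: indicator of [0,1);
   order k+1: ((x) B_k(x) + (k+1-x) B_k(x-1)) / k   (Cox--de Boor recursion). *)
Definition ind01 (x : R) : R :=
  if Rle_dec 0 x then (if Rlt_dec x 1 then 1 else 0) else 0.

Fixpoint cbspl (k : nat) (x : R) : R :=
  match k with
  | O => 0
  | S k' =>
      match k' with
      | O => ind01 x
      | S _ => (x * cbspl k' x + (INR k - x) * cbspl k' (x - 1)) / INR k'
      end
  end.

(* A B-spline phi^l_i is represented by its level l and multi-index i in Z^d
   (a list of length d).  The map (l,i) |-> phi^l_i is injective, so sets of
   B-splines are faithfully represented by sets of such indices. *)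
Record bspl := mkB { lev : nat; idx : list Z }.

(* Evaluation: phi^l_i(x) = prod_k Q(n^l x_k - i_k), Q = cbspl m.
   Points of R^d are x : nat -> R, only coordinates 0..d-1 are used. *)
Fixpoint prod_coords (m n l : nat) (x : nat -> R) (i : list Z) (j : nat) : R :=
  match i with
  | [] => 1
  | ik :: i' => cbspl m (INR n ^ l * x j - IZR ik) * prod_coords m n l x i' (S j)
  end.

Definition beval (m n : nat) (phi : bspl) (x : nat -> R) : R :=
  prod_coords m n (lev phi) x (idx phi) 0.

Definition in_box (lo : list Z) (off : Z) (k : list Z) : Prop :=
  length k = length lo /\
  forall j, (j < length lo)%nat ->
    (nth j lo 0 <= nth j k 0 <= nth j lo 0 + off)%Z.

(* B^0 = { phi^0_i : i in [-p:0]^d },  p = m-1 *)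
Definition inB0 (d m : nat) (phi : bspl) : Prop :=
  lev phi = O /\ in_box (repeat (- (Z.of_nat m - 1))%Z d) (Z.of_nat m - 1)%Z (idx phi).

(* child relation: phi^{l+1}_k in ch(phi^l_i)  iff  n i <= k <= n i + s m, s = n-1 *)
Definition is_child (n m : nat) (par ch : bspl) : Prop :=
  lev ch = S (lev par) /\
  in_box (map (Z.mul (Z.of_nat n)) (idx par))
         ((Z.of_nat n - 1) * Z.of_nat m)%Z (idx ch).

(* lineage: finite L (a list) of B-splines on R^d with L subset B^0 u ch(L) *)
Definition lineage (d n m : nat) (L : list bspl) : Prop :=
  (forall phi, In phi L -> length (idx phi) = d) /\
  (forall phi, In phi L -> inB0 d m phi \/ exists psi, In psi L /\ is_child n m psi phi).

(* membership in the hierarchical generator H = (B^0 u ch(L)) \ L *)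
Definition inH (d n m : nat) (L : list bspl) (phi : bspl) : Prop :=
  (inB0 d m phi \/ exists psi, In psi L /\ is_child n m psi phi) /\ ~ In phi L.

(* Cells I^l_k are represented by their index (l,k); this map is injective.
   cell support: II(phi^l_i) = { I^l_k : i <= k <= i + p } *)
Definition cell_of (m : nat) (phi : bspl) (l : nat) (k : list Z) : Prop :=
  l = lev phi /\ in_box (idx phi) (Z.of_nat m - 1)%Z k.

Definition cell_of_set (m : nat) (L : list bspl) (l : nat) (k : list Z) : Prop :=
  exists psi, In psi L /\ cell_of m psi l k.

(* H is absorbing: no phi in H with II(phi) subset II(L) *)
Definition absorbing (d n m : nat) (L : list bspl) : Prop :=
  ~ exists phi, inH d n m L phi /\
      (forall l k, cell_of m phi l k -> cell_of_set m L l k).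

Fixpoint lincomb (m n : nat) (c : bspl -> R) (S : list bspl) (x : nat -> R) : R :=
  match S with
  | [] => 0
  | phi :: S' => c phi * beval m n phi x + lincomb m n c S' x
  end.

(* linear independence of a set of functions (given by a predicate):
   every finite family of distinct members is linearly independent *)
Definition lin_indep (m n : nat) (P : bspl -> Prop) : Prop :=
  forall (S : list bspl) (c : bspl -> R),
    NoDup S -> (forall phi, In phi S -> P phi) ->
    (forall x : nat -> R, lincomb m n c S x = 0) ->
    forall phi, In phi S -> c phi = 0.

(* Main.v *)
Require Import Defs.
From Stdlib Require Import Reals ZArith List Lia Lra Classical.
Import ListNotations.
Open Scope R_scope.

Fixpoint nsum (N : nat) (f : nat -> R) : R :=
  match N with O => 0 | S N' => nsum N' f + f N' end.

Lemma nsum_ext N f g : (forall t, (t < N)%nat -> f t = g t) -> nsum N f = nsum N g.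
Proof.
  induction N; intros H; simpl; auto.
  rewrite IHN by (intros; apply H; lia). rewrite H by lia. auto.
Qed.

Lemma nsum_zero N : nsum N (fun _ => 0) = 0.
Proof. induction N; simpl; auto. rewrite IHN; ring. Qed.

Lemma nsum_mult N c f : c * nsum N f = nsum N (fun t => c * f t).
Proof. induction N; simpl. ring. rewrite <- IHN; ring. Qed.

Lemma nsum_plus N f g : nsum N (fun t => f t + g t) = nsum N f + nsum N g.
Proof. induction N; simpl. ring. rewrite IHN; ring. Qed.

Lemma nsum_hit N s f :
  nsum N (fun t => if Nat.eq_dec t s then f t else 0) = if lt_dec s N then f s else 0.
Proof.
  induction N; simpl. destruct (lt_dec s 0); [lia|auto].
  rewrite IHN. destruct (Nat.eq_dec N s); destruct (lt_dec s N); destruct (lt_dec s (S N));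
   subst; try lia; try ring.
Qed.

Lemma sum_shift N (al be F G : nat -> R) :
  (forall t, G (S t) = F t) ->
  nsum (S N) (fun t => al t * F t + be t * G t) =
  nsum N (fun t => (al t + be (S t)) * F t) + al N * F N + be O * G O.
Proof.
  intros HG. induction N.
  - simpl. ring.
  - change (nsum (S (S N)) (fun t => al t * F t + be t * G t)) with
      (nsum (S N) (fun t => al t * F t + be t * G t) + (al (S N) * F (S N) + be (S N) * G (S N))).
    rewrite IHN. simpl. rewrite HG. ring.
Qed.

Lemma cbspl_supp k x : (x < 0 \/ INR k <= x) -> cbspl k x = 0.
Proof.
  revert x. induction k as [|k IH]; intros x Hx.
  - reflexivity.
  - destruct k as [|k'].
    + simpl. unfold ind01. simpl in Hx.
      destruct (Rle_dec 0 x); destruct (Rlt_dec x 1); auto; lra.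
    + change (cbspl (S (S k')) x) with
       ((x * cbspl (S k') x + (INR (S (S k')) - x) * cbspl (S k') (x - 1)) / INR (S k')).
      rewrite (IH x), (IH (x - 1)). unfold Rdiv; ring.
      * rewrite S_INR in Hx. lra.
      * rewrite S_INR in Hx. lra.
Qed.

Lemma cbspl_SS k x : cbspl (S (S k)) x =
  (x * cbspl (S k) x + (INR (S (S k)) - x) * cbspl (S k) (x - 1)) / INR (S k).
Proof. reflexivity. Qed.

Lemma pu N u : 0 < u < 1 -> nsum (S N) (fun t => cbspl (S N) (u + INR t)) = 1.
Proof.
  intros Hu. induction N.
  - simpl. unfold ind01. destruct (Rle_dec 0 (u+0)); destruct (Rlt_dec (u+0) 1); try lra.
  - set (c := INR (S N)).
    assert (Hc : c > 0) by (unfold c; apply lt_0_INR; lia).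
    rewrite (nsum_ext _ _ (fun t => ((u + INR t)/c) * cbspl (S N) (u + INR t)
        + ((INR (S (S N)) - (u + INR t))/c) * cbspl (S N) (u + INR t - 1))).
    2:{ intros t _. rewrite cbspl_SS. fold c. field. lra. }
    rewrite sum_shift.
    2:{ intros t. rewrite S_INR. f_equal. ring. }
    rewrite (cbspl_supp (S N) (u + INR (S N))) by (right; lra).
    rewrite (cbspl_supp (S N) (u + INR 0 - 1)) by (left; simpl; lra).
    rewrite <- IHN.
    rewrite Rmult_0_r, Rmult_0_r, !Rplus_0_r.
    apply nsum_ext. intros t _.
    replace (INR (S (S N))) with (c + 1) by (unfold c; rewrite (S_INR (S N)); ring).
    rewrite (S_INR t). field_simplify; [|lra]. field. lra.
Qed.

Definition nonint (x : R) := forall z : Z, x <> IZR z.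

Lemma dext f g x l : (forall y, f y = g y) -> derivable_pt_lim f x l -> derivable_pt_lim g x l.
Proof.
  intros H D eps He. destruct (D eps He) as [del Hd]. exists del. intros h h0 hl.
  rewrite <- !H. auto.
Qed.

Lemma dmul f g x a b : derivable_pt_lim f x a -> derivable_pt_lim g x b ->
  derivable_pt_lim (fun y => f y * g y) x (a * g x + f x * b).
Proof. intros; exact (derivable_pt_lim_mult f g x a b H H0). Qed.

Lemma dplus f g x a b : derivable_pt_lim f x a -> derivable_pt_lim g x b ->
  derivable_pt_lim (fun y => f y + g y) x (a + b).
Proof. intros; exact (derivable_pt_lim_plus f g x a b H H0). Qed.

Lemma dconst c x : derivable_pt_lim (fun _ => c) x 0.
Proof. exact (derivable_pt_lim_const c x). Qed.

Lemma did x : derivable_pt_lim (fun y => y) x 1.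
Proof. exact (derivable_pt_lim_id x). Qed.

Lemma dshift f x c l : derivable_pt_lim f (x + c) l -> derivable_pt_lim (fun y => f (y + c)) x l.
Proof.
  intros D eps He. destruct (D eps He) as [del Hd]. exists del. intros h h0 hl.
  replace (x + h + c) with (x + c + h) by ring. auto.
Qed.

Lemma nonint_01 x : nonint x -> x <> 0 /\ x <> 1.
Proof. intros H. split; [apply (H 0%Z)|apply (H 1%Z)]. Qed.

Lemma ind01_deriv x : nonint x -> derivable_pt_lim ind01 x 0.
Proof.
  intros Hx. destruct (nonint_01 x Hx) as [H0 H1].
  assert (Hd : 0 < Rmin (Rabs x) (Rabs (x - 1))).
  { apply Rmin_glb_lt; apply Rabs_pos_lt; lra. }
  intros eps He. exists (mkposreal _ Hd). intros h h0 hl. simpl in hl.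
  assert (A1 : Rabs h < Rabs x) by (eapply Rlt_le_trans; [exact hl| apply Rmin_l]).
  assert (A2 : Rabs h < Rabs (x-1)) by (eapply Rlt_le_trans; [exact hl| apply Rmin_r]).
  assert (E : ind01 (x + h) = ind01 x).
  { revert A1 A2. unfold ind01, Rabs.
    destruct (Rcase_abs h); destruct (Rcase_abs x); destruct (Rcase_abs (x-1));
    destruct (Rle_dec 0 (x+h)); destruct (Rlt_dec (x+h) 1);
    destruct (Rle_dec 0 x); destruct (Rlt_dec x 1); intros; lra. }
  rewrite E. replace ((ind01 x - ind01 x) / h - 0) with 0 by (field; auto).
  rewrite Rabs_R0. auto.
Qed.

Lemma nonint_m1 x : nonint x -> nonint (x - 1).
Proof. intros H z E. apply (H (z + 1)%Z). rewrite plus_IZR. simpl. lra. Qed.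

Lemma cbspl_deriv k x : nonint x ->
  derivable_pt_lim (cbspl (S k)) x (cbspl k x - cbspl k (x - 1)).
Proof.
  revert x. induction k as [|k IH]; intros x Hx.
  - simpl. replace (0 - 0) with 0 by ring. apply (dext ind01). reflexivity.
    now apply ind01_deriv.
  - pose proof (IH x Hx) as D1. pose proof (IH (x - 1) (nonint_m1 x Hx)) as D2.
    assert (D2' : derivable_pt_lim (fun y => cbspl (S k) (y + -1)) x
                    (cbspl k (x - 1) - cbspl k (x - 1 - 1))).
    { apply dshift. exact D2. }
    assert (Dt := dmul _ _ x _ _
      (dplus _ _ x _ _ (dmul _ _ x _ _ (did x) D1)
         (dmul _ _ x _ _ (derivable_pt_lim_minus _ _ x _ _ (dconst (INR (S (S k))) x) (did x)) D2'))
      (dconst (/ INR (S k)) x)).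
    eapply dext in Dt.
    2:{ intros y. rewrite cbspl_SS. unfold minus_fct. unfold Rdiv. replace (y - 1) with (y + -1) by ring.
        reflexivity. }
    replace (cbspl (S k) x - cbspl (S k) (x - 1)) with
      ((1 * cbspl (S k) x + x * (cbspl k x - cbspl k (x - 1)) +
       ((0 - 1) * cbspl (S k) (x + -1) + (INR (S (S k)) - x) * (cbspl k (x - 1) - cbspl k (x - 1 - 1))))
       * / INR (S k) + (x * cbspl (S k) x + (INR (S (S k)) - x) * cbspl (S k) (x + -1)) * 0).
    exact Dt.
    replace (x + -1) with (x - 1) by ring.
    destruct k as [|k].
    + simpl. field.
    + rewrite (cbspl_SS k x), (cbspl_SS k (x - 1)).
      rewrite !S_INR. pose proof (pos_INR k). field. lra.
Qed.

Lemma deriv_zero g x l : (forall u, 0 < u < 1 -> g u = 0) -> 0 < x < 1 ->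
  derivable_pt_lim g x l -> l = 0.
Proof.
  intros Hg Hx D. destruct (Req_dec l 0) as [|Hl]; auto. exfalso.
  assert (He : 0 < Rabs l) by (apply Rabs_pos_lt; auto).
  destruct (D _ He) as [del Hd].
  set (h := Rmin (del / 2) ((1 - x) / 2)).
  assert (Hh : 0 < h) by (apply Rmin_glb_lt; pose proof (cond_pos del); lra).
  assert (Hh1 : h <= del/2) by apply Rmin_l.
  assert (Hh2 : h <= (1-x)/2) by apply Rmin_r.
  specialize (Hd h ltac:(lra)). rewrite Rabs_right in Hd by lra.
  specialize (Hd ltac:(pose proof (cond_pos del); lra)).
  rewrite (Hg (x+h)), (Hg x) in Hd by lra.
  replace ((0 - 0) / h - l) with (- l) in Hd by (field; lra).
  rewrite Rabs_Ropp in Hd. lra.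
Qed.

Lemma dsum N (f : nat -> R -> R) (l : nat -> R) x :
  (forall t, (t < N)%nat -> derivable_pt_lim (f t) x (l t)) ->
  derivable_pt_lim (fun y => nsum N (fun t => f t y)) x (nsum N l).
Proof.
  induction N; intros H; simpl.
  - apply dconst.
  - apply dplus. apply IHN; intros; apply H; lia. apply H; lia.
Qed.

Lemma nonint_u u t : 0 < u < 1 -> nonint (u + INR t).
Proof.
  intros Hu z E. rewrite INR_IZR_INZ in E.
  assert (0 < IZR (z - Z.of_nat t) < 1) by (rewrite minus_IZR; lra).
  destruct H as [H1 H2]. apply lt_IZR in H1. apply lt_IZR in H2. lia.
Qed.

Lemma indep1 N (a : nat -> R) :
  (forall u, 0 < u < 1 -> nsum N (fun t => a t * cbspl N (u + INR t)) = 0) ->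
  forall t, (t < N)%nat -> a t = 0.
Proof.
  revert a. induction N as [|N IH]; intros a Ha t Ht; [lia|].
  destruct N as [|N].
  - assert (t = O) by lia. subst.
    specialize (Ha (1/2) ltac:(lra)). simpl in Ha.
    unfold ind01 in Ha. destruct (Rle_dec 0 (1/2 + 0)); destruct (Rlt_dec (1/2+0) 1); try lra.
  -
    assert (Hd : forall u, 0 < u < 1 ->
      nsum (S N) (fun t => (a t - a (S t)) * cbspl (S N) (u + INR t)) = 0).
    { intros u Hu.
      assert (D := dsum (S (S N)) (fun t y => a t * cbspl (S (S N)) (y + INR t))
                  (fun t => a t * (cbspl (S N) (u + INR t) - cbspl (S N) (u + INR t - 1))) u).
      assert (D' : forall t0, (t0 < S (S N))%nat -> derivable_pt_lim (fun y => a t0 * cbspl (S (S N)) (y + INR t0)) u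
          (a t0 * (cbspl (S N) (u + INR t0) - cbspl (S N) (u + INR t0 - 1)))).
      { intros t0 _.
        replace (a t0 * (cbspl (S N) (u + INR t0) - cbspl (S N) (u + INR t0 - 1))) with
          (0 * cbspl (S (S N)) (u + INR t0) + a t0 * (cbspl (S N) (u + INR t0) - cbspl (S N) (u + INR t0 - 1))) by ring.
        apply (dmul (fun _ => a t0) (fun y => cbspl (S (S N)) (y + INR t0))); [apply dconst|].
        apply (dshift (cbspl (S (S N)))). apply cbspl_deriv. apply nonint_u; auto. }
      specialize (D D').
      assert (Z := deriv_zero _ u _ Ha Hu D).
      rewrite (nsum_ext _ _ (fun t => a t * cbspl (S N) (u + INR t) + (- a t) * cbspl (S N) (u + INR t - 1))) in Z
        by (intros; ring).
      rewrite sum_shift in Z.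
      2:{ intros t0. rewrite S_INR. f_equal; ring. }
      rewrite (cbspl_supp (S N) (u + INR (S N))) in Z by (right; lra).
      rewrite (cbspl_supp (S N) (u + INR 0 - 1)) in Z by (left; simpl; lra).
      rewrite <- Z. ring_simplify. apply nsum_ext. intros; ring. }
    specialize (IH _ Hd).
    assert (Hc : forall t, (t <= S N)%nat -> a t = a O).
    { induction t0; intros; auto. rewrite <- IHt0 by lia.
      specialize (IH t0 ltac:(lia)). lra. }
    specialize (Ha (1/2) ltac:(lra)).
    rewrite (nsum_ext _ _ (fun t => a O * cbspl (S (S N)) (1/2 + INR t))) in Ha
      by (intros; rewrite Hc by lia; auto).
    rewrite <- nsum_mult, pu in Ha by lra.
    rewrite Hc by lia. lra.
Qed.

Definition lsum {X : Type} (T : list X) (f : X -> R) : R :=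
  fold_right (fun x s => f x + s) 0 T.

Lemma lsum_ext_in {X} (T : list X) f g : (forall x, In x T -> f x = g x) -> lsum T f = lsum T g.
Proof.
  induction T; intros H; simpl; auto. rewrite H by (left; auto). rewrite IHT; auto.
  intros; apply H; right; auto.
Qed.

Lemma lsum_nsum {X} (T : list X) N (g : X -> nat -> R) :
  lsum T (fun x => nsum N (fun t => g x t)) = nsum N (fun t => lsum T (fun x => g x t)).
Proof.
  induction T; simpl. rewrite nsum_zero; auto.
  rewrite IHT. rewrite <- nsum_plus. auto.
Qed.

Lemma lsum_multr {X} (T : list X) f c : lsum T f * c = lsum T (fun x => c * f x).
Proof. induction T; simpl. ring. rewrite <- IHT. ring. Qed.

Fixpoint G (m : nat) (i k : list Z) (u : nat -> R) : R :=
  match i with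
  | [] => 1
  | i0 :: i' => cbspl m (IZR (hd 0%Z k) + u O - IZR i0) * G m i' (tl k) (fun j => u (S j))
  end.

Lemma regroup m k0 i0 u0 : (1 <= m)%nat -> 0 < u0 < 1 ->
  cbspl m (IZR k0 + u0 - IZR i0) =
  nsum m (fun t => cbspl m (u0 + INR t) * (if Z.eq_dec i0 (k0 - Z.of_nat t) then 1 else 0)).
Proof.
  intros Hm Hu.
  destruct (Z_le_dec 0 (k0 - i0)) as [H1|H1].
  destruct (Z_lt_dec (k0 - i0) (Z.of_nat m)) as [H2|H2].
  - set (s := Z.to_nat (k0 - i0)).
    rewrite (nsum_ext _ _ (fun t => if Nat.eq_dec t s then cbspl m (u0 + INR t) else 0)).
    + rewrite nsum_hit. destruct (lt_dec s m) as [|Hn]; [|unfold s in Hn; lia].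
      f_equal. unfold s. rewrite INR_IZR_INZ, Z2Nat.id by lia. rewrite minus_IZR. ring.
    + intros t _. destruct (Z.eq_dec i0 (k0 - Z.of_nat t)); destruct (Nat.eq_dec t s);
      unfold s in *; try lia; ring.
  - rewrite cbspl_supp. rewrite (nsum_ext _ _ (fun _ => 0)). rewrite nsum_zero; auto.
    intros t Ht. destruct (Z.eq_dec i0 (k0 - Z.of_nat t)); try lia; ring.
    right. assert (IZR (Z.of_nat m) <= IZR (k0 - i0)) by (apply IZR_le; lia).
    rewrite <- INR_IZR_INZ, minus_IZR in H. lra.
  - rewrite cbspl_supp. rewrite (nsum_ext _ _ (fun _ => 0)). rewrite nsum_zero; auto.
    intros t Ht. destruct (Z.eq_dec i0 (k0 - Z.of_nat t)); try lia; ring.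
    left. assert (IZR (k0 - i0) <= -1) by (apply IZR_le; lia).
    rewrite minus_IZR in H. lra.
Qed.

Definition ucons (u0 : R) (u : nat -> R) : nat -> R :=
  fun j => match j with O => u0 | S j' => u j' end.

Lemma indepD (m : nat) : (1 <= m)%nat -> forall d (X : Type) (T : list X) (iota : X -> list Z) (a : X -> R) (k : list Z),
  length k = d -> (forall x, In x T -> length (iota x) = d) ->
  (forall u, (forall j, 0 < u j < 1) -> lsum T (fun x => a x * G m (iota x) k u) = 0) ->
  forall j, in_box j (Z.of_nat m - 1)%Z k ->
  lsum T (fun x => if list_eq_dec Z.eq_dec (iota x) j then a x else 0) = 0.
Proof.
  intros Hm d. induction d as [|d IH]; intros X T iota a k Hk HT Hs j Hj.
  - destruct k; [|simpl in Hk; lia]. destruct Hj as [Hj _]. destruct j; [|simpl in Hj; lia].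
    specialize (Hs (fun _ => 1/2) ltac:(intros; lra)).
    rewrite <- Hs. apply lsum_ext_in. intros x Hx.
    specialize (HT x Hx). destruct (iota x); [|simpl in HT; lia].
    destruct (list_eq_dec Z.eq_dec [] []); [|congruence]. simpl. ring.
  - destruct k as [|k0 k']; [simpl in Hk; lia|]. simpl in Hk.
    destruct Hj as [Hjl Hjb]. destruct j as [|j0 j']; [simpl in Hjl; lia|].
    set (at_ := fun (t : nat) x => match iota x with i0 :: _ =>
                   if Z.eq_dec i0 (k0 - Z.of_nat t) then a x else 0 | [] => 0 end).
    assert (Step1 : forall u', (forall j, 0 < u' j < 1) -> forall t, (t < m)%nat ->
              lsum T (fun x => at_ t x * G m (tl (iota x)) k' u') = 0).
    { intros u' Hu'. apply indep1. intros u0 Hu0.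
      specialize (Hs (ucons u0 u') ltac:(intros [|j1]; simpl; auto)).
      rewrite <- Hs.
      rewrite (nsum_ext _ _ (fun t => lsum T (fun x => cbspl m (u0 + INR t) * (at_ t x * G m (tl (iota x)) k' u'))))
        by (intros; apply lsum_multr).
      rewrite <- lsum_nsum. symmetry.
      apply lsum_ext_in. intros x Hx. specialize (HT x Hx).
      destruct (iota x) as [|i0 i'] eqn:Ei; [simpl in HT; lia|].
      simpl. rewrite (regroup m k0 i0 u0) by auto.
      transitivity ((a x * G m i' k' u') *
        nsum m (fun t => cbspl m (u0 + INR t) * (if Z.eq_dec i0 (k0 - Z.of_nat t) then 1 else 0))).
      change (fun j : nat => u' j) with u'. ring.
      rewrite nsum_mult. apply nsum_ext. intros t _. unfold at_. rewrite Ei.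
      destruct (Z.eq_dec i0 (k0 - Z.of_nat t)); ring. }
    simpl in Hjb. assert (Hb0 := Hjb O ltac:(lia)). simpl in Hb0.
    set (t := Z.to_nat (k0 - j0)).
    assert (Ht : (t < m)%nat) by (unfold t; lia).
    assert (IHa := IH X T (fun x => tl (iota x)) (at_ t) k' ltac:(lia)).
    assert (E : lsum T (fun x => if list_eq_dec Z.eq_dec (tl (iota x)) j' then at_ t x else 0) = 0).
    { apply IHa.
      - intros x Hx. specialize (HT x Hx). destruct (iota x); simpl in *; lia.
      - intros u Hu. apply Step1; auto.
      - split. simpl in Hjl; lia. intros j1 Hj1. apply (Hjb (S j1)). simpl; lia. }
    assert (Et : (k0 - Z.of_nat t)%Z = j0) by (unfold t; rewrite Z2Nat.id; lia).
    etransitivity; [|exact E]. apply lsum_ext_in. intros x Hx. specialize (HT x Hx).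
    unfold at_. destruct (iota x) as [|i0 i']; [simpl in HT; lia|]. cbn [tl].
    destruct (list_eq_dec Z.eq_dec (i0 :: i') (j0 :: j')) as [e|ne];
    destruct (list_eq_dec Z.eq_dec i' j') as [e'|ne'];
    destruct (Z.eq_dec i0 (k0 - Z.of_nat t)) as [e''|ne''];
    try reflexivity; try (exfalso; apply ne; congruence); try (exfalso; injection e; intros; congruence).
Qed.

Definition SB (n m l : nat) (i : list Z) (x : nat -> R) : Prop :=
  forall j, (j < length i)%nat ->
    IZR (nth j i 0%Z) <= INR n ^ l * x j < IZR (nth j i 0%Z) + INR m.

Lemma supp_prod n m l x i j0 : prod_coords m n l x i j0 <> 0 ->
  forall j, (j < length i)%nat ->
    IZR (nth j i 0%Z) <= INR n ^ l * x (j0 + j)%nat < IZR (nth j i 0%Z) + INR m.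
Proof.
  revert j0. induction i as [|ik i IH]; intros j0 H j Hj; simpl in Hj; [lia|].
  simpl in H. assert (H1 : cbspl m (INR n ^ l * x j0 - IZR ik) <> 0) by (intro E; apply H; rewrite E; ring).
  assert (H2 : prod_coords m n l x i (S j0) <> 0) by (intro E; apply H; rewrite E; ring).
  destruct j as [|j].
  - simpl. rewrite Nat.add_0_r.
    destruct (Rlt_dec (INR n ^ l * x j0 - IZR ik) 0). exfalso; apply H1, cbspl_supp; auto.
    destruct (Rle_dec (INR m) (INR n ^ l * x j0 - IZR ik)). exfalso; apply H1, cbspl_supp; auto.
    lra.
  - simpl. replace (j0 + S j)%nat with (S j0 + j)%nat by lia. apply IH; auto; lia.
Qed.

Lemma supp_beval n m psi x : beval m n psi x <> 0 -> SB n m (lev psi) (idx psi) x.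
Proof. intros H j Hj. exact (supp_prod n m (lev psi) x (idx psi) 0 H j Hj). Qed.

Lemma prod_G n m l x c i j0 k u : c = INR n ^ l -> c <> 0 ->
  (forall j, x (j0 + j)%nat = (IZR (nth j k 0%Z) + u j) / c) ->
  prod_coords m n l x i j0 = G m i k u.
Proof.
  intros Hc Hc0. revert j0 k u. induction i as [|i0 i IH]; intros j0 k u Hx; simpl; auto.
  f_equal.
  - f_equal. specialize (Hx O). rewrite Nat.add_0_r in Hx. rewrite Hx, <- Hc.
    destruct k; simpl; field; auto.
  - apply IH. intros j. replace (S j0 + j)%nat with (j0 + S j)%nat by lia. rewrite Hx.
    destruct k; simpl; auto. destruct j; simpl; auto.
Qed.

Lemma nth_map_mul a l j : nth j (map (Z.mul a) l) 0%Z = (a * nth j l 0)%Z.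
Proof. revert j; induction l; intros [|j]; simpl; auto; lia. Qed.

Lemma nest n m rho psi x : (2 <= n)%nat -> is_child n m rho psi ->
  SB n m (lev psi) (idx psi) x -> SB n m (lev rho) (idx rho) x.
Proof.
  intros Hn [Hl [Hlen Hb]] H j Hj. rewrite length_map in Hlen.
  assert (Hj' : (j < length (idx psi))%nat) by lia.
  specialize (H j Hj'). rewrite length_map in Hb. specialize (Hb j Hj).
  rewrite nth_map_mul in Hb. rewrite Hl in H. simpl in H.
  set (r := nth j (idx rho) 0%Z) in *. set (p := nth j (idx psi) 0%Z) in *.
  destruct Hb as [Hb1 Hb2]. apply IZR_le in Hb1. apply IZR_le in Hb2.
  rewrite mult_IZR, <- INR_IZR_INZ in Hb1.
  rewrite plus_IZR, !mult_IZR, minus_IZR, <- !INR_IZR_INZ in Hb2.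
  assert (HN : 2 <= INR n) by (replace 2 with (INR 2) by (simpl; ring); apply le_INR; auto).
  set (y := INR n ^ lev rho * x j) in *.
  replace (INR n * INR n ^ lev rho * x j) with (INR n * y) in H by (unfold y; ring).
  simpl in Hb2. assert (0 <= INR m) by apply pos_INR.
  split; nra.
Qed.

Lemma ancestor d n m L l x : (2 <= n)%nat -> lineage d n m L ->
  forall r rho, In rho L -> lev rho = (l + r)%nat -> SB n m (lev rho) (idx rho) x ->
  exists sigma, In sigma L /\ lev sigma = l /\ SB n m l (idx sigma) x.
Proof.
  intros Hn [_ HL] r. induction r as [|r IH]; intros rho Hin Hlev Hsb.
  - exists rho. rewrite Nat.add_0_r in Hlev. subst. auto.
  - destruct (HL rho Hin) as [[H0 _]|[rho' [Hin' Hc]]]; [lia|].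
    apply (IH rho' Hin'). destruct Hc as [Hc _]. lia.
    apply (nest n m rho' rho x Hn Hc Hsb).
Qed.

Lemma lsum_zero {X} (T : list X) : lsum T (fun _ => 0) = 0.
Proof. induction T; simpl; auto. rewrite IHT; ring. Qed.

Lemma lsum_single (S : list bspl) (c : bspl -> R) phi
  (dec : forall a b : bspl, {a = b} + {a <> b}) :
  NoDup S -> In phi S -> lsum S (fun psi => if dec psi phi then c psi else 0) = c phi.
Proof.
  induction S as [|a S0 IH]; intros HN Hin; [destruct Hin|].
  inversion HN; subst. simpl. destruct (dec a phi) as [e|ne].
  - subst. rewrite (lsum_ext_in S0 _ (fun _ => 0)). 
    + rewrite lsum_zero; ring.
    + intros x Hx. destruct (dec x phi); subst; auto. contradiction.
  - destruct Hin as [e|Hin]; [congruence|]. rewrite IH; auto. ring.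
Qed.

Lemma bspl_eq_dec : forall a b : bspl, {a = b} + {a <> b}.
Proof. decide equality. apply (list_eq_dec Z.eq_dec). apply Nat.eq_dec. Qed.

Lemma inH_len d n m L psi : lineage d n m L -> inH d n m L psi -> length (idx psi) = d.
Proof.
  intros [HL _] [[[_ [Hb _]]|[rho [Hin [_ [Hb _]]]]] _].
  - rewrite Hb, repeat_length; auto.
  - rewrite Hb, length_map; auto.
Qed.

Theorem lemma6p7 (d n m : nat) (L : list bspl) :
  (1 <= d)%nat -> (2 <= n)%nat -> (2 <= m)%nat ->
  lineage d n m L ->
  absorbing d n m L ->
  lin_indep m n (inH d n m L).
Proof.
  intros Hd Hn Hm Hlin Habs S0 c HND HSH Hzero.
  assert (Main : forall l phi, In phi S0 -> lev phi = l -> c phi = 0).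
  2:{ intros phi Hphi. exact (Main _ phi Hphi eq_refl). }
  intros l. induction l as [l IHl] using (well_founded_induction lt_wf).
  intros phi Hphi Hlev.
  assert (Hk : exists l' k, cell_of m phi l' k /\ ~ cell_of_set m L l' k).
  { apply NNPP; intro Hne. apply Habs. exists phi. split; [apply HSH; auto|].
    intros l' k Hc. apply NNPP; intro Hn'. apply Hne. eauto. }
  destruct Hk as [l' [k [[Hl' Hbox] Hnot]]]. subst l'. rewrite Hlev in Hnot.
  assert (Hlphi := inH_len d n m L phi Hlin (HSH phi Hphi)).
  assert (Hklen : length k = d) by (destruct Hbox as [Hb _]; lia).
  set (a := fun psi => if Nat.eq_dec (lev psi) l then c psi else 0).
  assert (HN0 : INR n ^ l <> 0) by (apply pow_nonzero; apply not_0_INR; lia).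
  assert (Rind := indepD m ltac:(lia) d bspl S0 idx a k Hklen
     (fun psi Hp => inH_len d n m L psi Hlin (HSH psi Hp))).
  assert (Hs : forall u, (forall j, 0 < u j < 1) -> lsum S0 (fun psi => a psi * G m (idx psi) k u) = 0).
  { intros u Hu.
    set (x := fun j => (IZR (nth j k 0%Z) + u j) / INR n ^ l).
    rewrite <- (Hzero x).
    assert (Gen : forall S1, (forall psi, In psi S1 -> In psi S0) ->
               lsum S1 (fun psi => a psi * G m (idx psi) k u) = lincomb m n c S1 x).
    2:{ apply Gen; auto. }
    induction S1 as [|psi S1 IHS]; intros Hsub; simpl; auto.
    rewrite IHS by (intros; apply Hsub; right; auto).
    f_equal.
    assert (Hpsi : In psi S0) by (apply Hsub; left; auto).
    unfold a. destruct (Nat.eq_dec (lev psi) l) as [e|ne].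
    - f_equal. unfold beval. symmetry. rewrite e.
      apply (prod_G n m l x (INR n ^ l)); auto.
    - destruct (Nat.lt_ge_cases (lev psi) l) as [Hlt|Hge].
      + rewrite (IHl (lev psi) Hlt psi Hpsi eq_refl). ring.
      + assert (Hb : beval m n psi x = 0).
        { apply NNPP; intro Hb. apply supp_beval in Hb.
          destruct (HSH psi Hpsi) as [[[H0 _]|[rho [Hin Hc]]] _]; [lia|].
          pose proof (nest n m rho psi x Hn Hc Hb) as Hr.
          destruct Hc as [Hcl _].
          destruct (ancestor d n m L l x Hn Hlin (lev rho - l) rho Hin ltac:(lia) Hr)
            as [sigma [Hsig [Hsl Hsb]]].
          apply Hnot. exists sigma. split; auto. split; auto.
          assert (Hsiglen : length (idx sigma) = d) by (destruct Hlin as [HL _]; auto).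
          split; [lia|]. intros j Hj. specialize (Hsb j Hj).
          assert (Ex : INR n ^ l * x j = IZR (nth j k 0%Z) + u j) by (unfold x; field; auto).
          rewrite Ex in Hsb. specialize (Hu j). destruct Hsb as [H1 H2].
          assert (A1 : IZR (nth j (idx sigma) 0%Z) < IZR (nth j k 0%Z + 1)) by (rewrite plus_IZR; lra).
          assert (A2 : IZR (nth j k 0%Z) < IZR (nth j (idx sigma) 0%Z + Z.of_nat m))
            by (rewrite plus_IZR, <- INR_IZR_INZ; lra).
          apply lt_IZR in A1. apply lt_IZR in A2. lia. }
        rewrite Hb. ring. }
  specialize (Rind Hs (idx phi) Hbox).
  rewrite <- (lsum_single S0 c phi bspl_eq_dec HND Hphi).
  rewrite <- Rind. apply lsum_ext_in. intros psi Hpsi.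
  unfold a. destruct (bspl_eq_dec psi phi) as [e|ne].
  - subst. destruct (list_eq_dec Z.eq_dec (idx phi) (idx phi)); [|congruence].
    destruct (Nat.eq_dec (lev phi) (lev phi)); congruence.
  - destruct (list_eq_dec Z.eq_dec (idx psi) (idx phi)) as [e|]; auto.
    destruct (Nat.eq_dec (lev psi) l) as [e'|]; auto.
    exfalso. apply ne. destruct psi, phi; simpl in *; subst; auto.
Qed.
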